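(* Let $n\in\mathbb{N}\cup\{0\}$, $A_1,\dots,A_n\in\mathscr{Q}$ and $\mathcal{A}=\{A_1,\dots,A_n\}$. An option set $S\in\mathscr{Q}$ belongs to $\mathrm{Ex}(\mathcal{A})$ if and only if either $S\cap\mathscr{V}_{>0}\neq\emptyset$, or $n\neq0$ and there exists $T\in\mathrm{Posi}'(A_1,\dots,A_n)$ such that for every $t\in T$ there is some $s\in S\cup\{0\}$ with $t\le s$.
   Context: Let $\mathcal{X}$ be a nonempty set and let $\mathscr{V}$ be the real vector space of all functions $u:\mathcal{X}\to\mathbb{R}$ (options), with pointwise operations. For $u,v\in\mathscr{V}$, $u\le v$ iff $u(x)\le v(x)$ for all $x\in\mathcal{X}$, and $u<v$ iff $u\le v$ and $u\neq v$. Let $\mathscr{V}_{>0}=\{u\in\mathscr{V}:0<u\}$ and $\mathscr{V}^s_{>0}=\{\{u\}:u\in\mathscr{V}_{>0}\}$. Let $\mathscr{Q}$ be the set of all finite subsets of $\mathscr{V}$ (including $\emptyset$). For a positive integer $n$, $\mathbb{R}^{n,+}=\{\boldsymbol\lambda\in\mathbb{R}^n:\lambda_j\ge0\ \forall j,\ \sum_j\lambda_j>0\}$, and for $\boldsymbol\lambda\in\mathbb{R}^n$, $\mathbf u=(u_1,\dots,u_n)\in\mathscr{V}^n$, $\boldsymbol\lambda\mathbf u=\sum_{j=1}^n\lambda_ju_j$. A set of desirable option sets is any $K\subseteq\mathscr{Q}$. It is coherent if for all $A,B\in K$: (K0) $A\setminus\{0\}\in K$; (K1) $\{0\}\notin K$;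 (K2) $\mathscr{V}^s_{>0}\subseteq K$; (K3) $\{\boldsymbol\lambda(\mathbf u)\mathbf u:\mathbf u\in A\times B\}\in K$ for every map $\boldsymbol\lambda:A\times B\to\mathbb{R}^{2,+}$; (K4) $A\cup Q\in K$ for all $Q\in\mathscr{Q}$. $\bar{\mathbf K}$ denotes the set of coherent sets of desirable option sets. An assessment is any subset $\mathcal{A}\subseteq\mathscr{Q}$. Let $\bar{\mathbf K}(\mathcal A)=\{K\in\bar{\mathbf K}:\mathcal A\subseteq K\}$ and $\mathrm{Ex}(\mathcal A)=\bigcap\bar{\mathbf K}(\mathcal A)$, with the convention $\bigcap\emptyset=\mathscr{Q}$. For a positive integer $n$ and $A_1,\dots,A_n\in\mathscr{Q}$: $\mathrm{Posi}'(A_1,\dots,A_n)=\{\{\boldsymbol\lambda(\mathbf u)\mathbf u:\mathbf u\in\times_{j=1}^nA_j\}:\ \boldsymbol\lambda:\times_{j=1}^nA_j\to\mathbb{R}^{n,+}\}$. *)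

(* Defs.v *)
From Stdlib Require Import Reals List.
Open Scope R_scope.

Section Opts.
Variable X : Type.

Definition opt := X -> R.
Definition oset := opt -> Prop.

Definition zero : opt := fun _ => 0.
Definition ople (u v : opt) : Prop := forall x, u x <= v x.
Definition oplt (u v : opt) : Prop := ople u v /\ u <> v.
Definition posopt (u : opt) : Prop := oplt zero u.

(* membership in Q: finite option sets *)
Definition finite_oset (A : oset) : Prop :=
  exists l : list opt, forall u, A u <-> In u l.

Fixpoint sumR (n : nat) (f : nat -> R) : R :=
  match n with O => 0 | S m => sumR m f + f m end.

(* lambda in R^{n,+} (only the first n coordinates matter) *)
Definition Rnplus (n : nat) (lam : nat -> R) : Prop :=
  (forall j, (j < n)%nat -> 0 <= lam j) /\ 0 < sumR n lam.

Definition coherent (K : oset -> Prop) : Prop :=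
  (forall A, K A -> finite_oset A) /\
  (* K0 *) (forall A, K A -> K (fun u => A u /\ u <> zero)) /\
  (* K1 *) ~ K (fun u => u = zero) /\
  (* K2 *) (forall v, posopt v -> K (fun u => u = v)) /\
  (* K3 *) (forall A B, K A -> K B ->
             forall lam : opt -> opt -> (nat -> R),
               (forall u v, A u -> B v -> Rnplus 2 (lam u v)) ->
               K (fun w => exists u v, A u /\ B v /\
                   w = (fun x => lam u v 0%nat * u x + lam u v 1%nat * v x))) /\
  (* K4 *) (forall A Q, K A -> finite_oset Q -> K (fun u => A u \/ Q u)).

(* Ex(𝒜) = ⋂ {K coherent | 𝒜 ⊆ K}, with ⋂ ∅ = Q *)
Definition Ex (Aset : oset -> Prop) (S : oset) : Prop :=
  finite_oset S /\
  forall K, coherent K -> (forall A, Aset A -> K A) -> K S.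

(* tuples in A_1 × ... × A_n, as lists of length n (0-indexed) *)
Definition in_prod (n : nat) (A : nat -> oset) (u : list opt) : Prop :=
  length u = n /\ forall j, (j < n)%nat -> A j (nth j u zero).

Definition lincomb (n : nat) (lam : nat -> R) (u : list opt) : opt :=
  fun x => sumR n (fun j => lam j * nth j u zero x).

Definition Posi' (n : nat) (A : nat -> oset) (T : oset) : Prop :=
  exists lam : list opt -> (nat -> R),
    (forall u, in_prod n A u -> Rnplus n (lam u)) /\
    forall w, T w <-> exists u, in_prod n A u /\ w = lincomb n (lam u) u.

End Opts.

(* Main.v *)
Require Import Defs.
From Stdlib Require Import Reals List Lra Lia Classical ClassicalEpsilon FunctionalExtensionality PropExtensionality.
Open Scope R_scope.

Lemma sumR_ext n f g : (forall j, (j < n)%nat -> f j = g j) -> sumR n f = sumR n g.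
Proof. induction n; simpl; intros H; auto. rewrite IHn by (intros; apply H; lia). rewrite (H n) by lia. auto. Qed.

Lemma sumR_nonneg n f : (forall j, (j < n)%nat -> 0 <= f j) -> 0 <= sumR n f.
Proof. induction n; simpl; intros H; [lra|]. assert (0 <= f n) by (apply H; lia).
  assert (0 <= sumR n f) by (apply IHn; intros; apply H; lia). lra. Qed.

Lemma sumR_zero_each n f : (forall j, (j < n)%nat -> 0 <= f j) -> ~ 0 < sumR n f ->
  forall j, (j < n)%nat -> f j = 0.
Proof. induction n; simpl; intros H Hs j Hj; [lia|].
  assert (0 <= f n) by (apply H; lia).
  assert (0 <= sumR n f) by (apply sumR_nonneg; intros; apply H; lia).
  destruct (Nat.eq_dec j n). subst; lra.
  apply IHn; [intros; apply H; lia| lra| lia]. Qed.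

Lemma sumR_zero n f : (forall j, (j < n)%nat -> f j = 0) -> sumR n f = 0.
Proof. induction n; simpl; intros H; auto. rewrite IHn by (intros; apply H; lia). rewrite H by lia. lra. Qed.

Lemma sumR_scal n c f : sumR n (fun j => c * f j) = c * sumR n f.
Proof. induction n; simpl; [lra|]. rewrite IHn. lra. Qed.

Lemma sumR_add n f g : sumR n (fun j => f j + g j) = sumR n f + sumR n g.
Proof. induction n; simpl; [lra|]. rewrite IHn. lra. Qed.

Lemma sumR_ind n j g : (j < n)%nat -> sumR n (fun k => (if Nat.eqb k j then 1 else 0) * g k) = g j.
Proof. induction n; intros H; [lia|]. simpl. destruct (Nat.eq_dec j n).
  - subst. rewrite Nat.eqb_refl. rewrite sumR_zero. lra.
    intros k Hk. destruct (Nat.eqb_spec k n); [lia|lra].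
  - rewrite IHn by lia. destruct (Nat.eqb_spec n j); [lia|lra]. Qed.

Lemma Rnplus_scale n l c : Rnplus n l -> 0 < c -> Rnplus n (fun j => c * l j).
Proof. intros [H1 H2] Hc. split. intros j Hj. specialize (H1 j Hj). nra.
  rewrite sumR_scal. nra. Qed.

Lemma Rnplus_comb n l1 l2 m : Rnplus n l1 -> Rnplus n l2 -> Rnplus 2 m ->
  Rnplus n (fun j => m 0%nat * l1 j + m 1%nat * l2 j).
Proof. intros [H1 H2] [H3 H4] [H5 H6]. simpl in H6.
  assert (0 <= m 0%nat) by (apply H5; lia). assert (0 <= m 1%nat) by (apply H5; lia).
  split. intros j Hj. specialize (H1 j Hj). specialize (H3 j Hj). nra.
  rewrite sumR_add, !sumR_scal. destruct (Rlt_dec 0 (m 0%nat)).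
  assert (0 <= m 1%nat * sumR n l2) by nra. nra.
  assert (Em : m 0%nat = 0) by lra. rewrite Em. nra. Qed.

Lemma lincomb_scale X n l c u x : lincomb X n (fun j => c * l j) u x = c * lincomb X n l u x.
Proof. unfold lincomb. rewrite <- sumR_scal. apply sumR_ext. intros; ring. Qed.

Lemma lincomb_comb X n l1 l2 a b u x :
  lincomb X n (fun j => a * l1 j + b * l2 j) u x = a * lincomb X n l1 u x + b * lincomb X n l2 u x.
Proof. unfold lincomb. rewrite <- !sumR_scal, <- sumR_add. apply sumR_ext. intros; ring. Qed.

Lemma posopt_ex X u : posopt X u -> exists x, 0 < u x.
Proof. intros [H1 H2]. apply NNPP. intros Hn. apply H2. extensionality x.
  unfold zero. specialize (H1 x). unfold zero in H1. destruct (Rlt_dec 0 (u x)).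
  exfalso; apply Hn; eauto. lra. Qed.

Lemma posopt_neq X u : posopt X u -> u <> zero X.
Proof. intros [_ H] E. apply H. auto. Qed.

Lemma finite_sub X (B : oset X) : (exists l, forall u, B u -> In u l) -> finite_oset X B.
Proof. intros [l Hl]. revert B Hl. induction l as [|a l IH]; intros B Hl.
  - exists nil. intros u; split; [intros H; apply Hl; auto| intros []].
  - destruct (IH (fun u => B u /\ u <> a)) as [l' Hl'].
    { intros u [Hu Hne]. destruct (Hl u Hu); [congruence|auto]. }
    destruct (classic (B a)).
    + exists (a :: l'). intros u; split.
      * intros Hu. destruct (classic (u = a)). subst; left; auto. right; apply Hl'; auto.
      * intros [E|Hi]. subst; auto. apply Hl' in Hi; tauto.
    + exists l'. intros u; split.
      * intros Hu. apply Hl'. split; auto. intros E; subst; auto.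
      * intros Hi. apply Hl' in Hi; tauto. Qed.

Lemma K_ext X (K : oset X -> Prop) P Q : K P -> (forall w, P w <-> Q w) -> K Q.
Proof. intros HK H. replace Q with P; auto. extensionality w. apply propositional_extensionality. auto. Qed.

Lemma choice_fun (A B : Type) (b0 : B) (P : A -> Prop) (Q : A -> B -> Prop) :
  (forall a, P a -> exists b, Q a b) -> exists f : A -> B, forall a, P a -> Q a (f a).
Proof. intros H.
  assert (H' : forall a, exists b, P a -> Q a b).
  { intros a. destruct (classic (P a)) as [Hp|Hp]. destruct (H a Hp) as [b Hb]. exists b; auto.
    exists b0. intros; contradiction. }
  exists (fun a => proj1_sig (constructive_indefinite_description _ (H' a))).
  intros a Ha. destruct (constructive_indefinite_description _ (H' a)); simpl; auto. Qed.

Definition e0 : nat -> R := fun k => if Nat.eqb k 0 then 1 else 0.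
Definition w2 (a b : R) : nat -> R := fun k => if Nat.eqb k 0 then a else b.

Lemma Rnplus_w2 a b : 0 <= a -> 0 <= b -> 0 < a + b -> Rnplus 2 (w2 a b).
Proof. intros. split. intros j Hj. unfold w2. destruct j; simpl; auto. simpl. unfold w2; simpl. lra. Qed.

Lemma dom_lemma X (K : oset X -> Prop) (HK : coherent X K) (S : oset X) :
  forall l (R : oset X), K R ->
  (forall w, R w -> (S w \/ w = zero X) \/ (In w l /\ exists s, (S s \/ s = zero X) /\ ople X w s)) ->
  exists R', K R' /\ forall w, R' w -> S w \/ w = zero X.
Proof.
  destruct HK as (Hfin & HK0 & HK1 & HK2 & HK3 & HK4).
  induction l as [|r l IH]; intros R HR Hinv.
  - exists R. split; auto. intros w Hw. destruct (Hinv w Hw) as [H|[[] _]]; auto.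
  - destruct (classic (exists s, (S s \/ s = zero X) /\ ople X r s /\ s <> r)) as [[s [Hs1 [Hs2 Hs3]]]|Hno].
    + set (p := fun x => s x - r x).
      assert (Hp : posopt X p).
      { split. intros x. unfold zero, p. specialize (Hs2 x). lra.
        intros E. apply Hs3. extensionality x. assert (E' := f_equal (fun f => f x) E).
        unfold zero, p in E'. simpl in E'. lra. }
      pose (lam := fun (w q : opt X) => if excluded_middle_informative (w = r) then w2 1 1 else w2 1 0).
      assert (HK' := HK3 R (fun u => u = p) HR (HK2 p Hp) lam).
      apply IH in HK'.
      * exact HK'.
      * intros u v _ _. unfold lam. destruct excluded_middle_informative; apply Rnplus_w2; lra.
      * intros w' (w & q & Hw & Hq & E). subst q. unfold lam in E.
        destruct excluded_middle_informative as [Er|Ner].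
        -- subst w. left. replace w' with s; auto. rewrite E. extensionality x. unfold w2, p; simpl. ring.
        -- assert (Ew : w' = w) by (rewrite E; extensionality x; unfold w2; simpl; ring). rewrite Ew.
           destruct (Hinv w Hw) as [H0|[[E'|Hi] Hd]]; [auto|congruence|right; split; auto].
    + apply IH with R; auto. intros w Hw. destruct (Hinv w Hw) as [H|[[E'|Hi] Hd]]; auto.
      subst w. destruct Hd as [s [Hs1 Hs2]]. destruct (classic (s = r)). subst; auto.
      exfalso. apply Hno. eauto.
Qed.

Lemma dom_final X (K : oset X -> Prop) (HK : coherent X K) (S R : oset X) :
  finite_oset X S -> K R -> (forall r, R r -> exists s, (S s \/ s = zero X) /\ ople X r s) -> K S.
Proof.
  intros HS HR Hd. assert (HK' := HK).
  destruct HK' as (Hfin & HK0 & HK1 & HK2 & HK3 & HK4).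
  destruct (Hfin R HR) as [l Hl].
  destruct (dom_lemma X K HK S l R HR) as [R' [HR' Hsub]].
  { intros w Hw. right. split. apply Hl; auto. auto. }
  apply HK0 in HR'. apply (HK4 _ S) in HR'; auto.
  apply (K_ext X K _ _ HR'). intros w. split; [|auto].
  intros [[H1 H2]|H]; auto. destruct (Hsub w H1); tauto.
Qed.

Lemma pos_final X (K : oset X -> Prop) (HK : coherent X K) (S : oset X) u :
  finite_oset X S -> S u -> posopt X u -> K S.
Proof.
  intros HS Hu Hp. destruct HK as (Hfin & HK0 & HK1 & HK2 & HK3 & HK4).
  assert (H := HK4 _ S (HK2 u Hp) HS). apply (K_ext X K _ _ H).
  intros w; split; [intros [E|H']; [subst; auto|auto] | auto].
Qed.

Lemma nth_app_l X (u : list (opt X)) c j : (j < length u)%nat -> nth j (u ++ c :: nil) (zero X) = nth j u (zero X).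
Proof. intros; apply app_nth1; auto. Qed.

Lemma nth_app_last X (u : list (opt X)) c : nth (length u) (u ++ c :: nil) (zero X) = c.
Proof. rewrite app_nth2 by lia. rewrite Nat.sub_diag. reflexivity. Qed.

Lemma in_prod_app X n A u c : Defs.in_prod X n A u -> A n c -> Defs.in_prod X (S n) A (u ++ c :: nil).
Proof. intros [Hl Hu] Hc. split. rewrite length_app; simpl; lia.
  intros j Hj. destruct (Nat.eq_dec j n). subst j. rewrite <- Hl, nth_app_last. rewrite Hl; auto.
  rewrite nth_app_l by lia. apply Hu; lia. Qed.

Lemma lincomb_S X n l (u : list (opt X)) c x : length u = n ->
  lincomb X (S n) l (u ++ c :: nil) x = lincomb X n l u x + l n * c x.
Proof. intros Hl. unfold lincomb. change (sumR (S n) ?F) with (sumR n F + F n).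
  cbv beta. assert (E : nth n (u ++ c :: nil) (zero X) = c) by (rewrite <- Hl; apply nth_app_last).
  rewrite E. f_equal. apply sumR_ext. intros j Hj.
  rewrite nth_app_l by lia. auto. Qed.

Lemma posi_closure X (K : oset X -> Prop) (HK : coherent X K) : forall m (A : nat -> oset X),
  (forall j, (j < S m)%nat -> K (A j)) -> (forall j, (j < S m)%nat -> finite_oset X (A j)) ->
  forall lam, (forall u, Defs.in_prod X (S m) A u -> Rnplus (S m) (lam u)) ->
  exists R, K R /\ forall r, R r -> exists u, Defs.in_prod X (S m) A u /\ r = lincomb X (S m) (lam u) u.
Proof.
  assert (HK' := HK). destruct HK' as (Hfin & HK0 & HK1 & HK2 & HK3 & HK4).
  induction m as [|m IHm]; intros A HAK HAf lam Hlam.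
  - pose (lam' := fun (u v : opt X) => w2 (lam (u :: nil) 0%nat) 0).
    assert (H := HK3 (A 0%nat) (A 0%nat) (HAK 0%nat ltac:(lia)) (HAK 0%nat ltac:(lia)) lam').
    eexists; split; [apply H|].
    + intros u v Hu _. assert (Hp : Defs.in_prod X 1 A (u :: nil)).
      { split; auto. intros j Hj. destruct j; [simpl; auto| lia]. }
      destruct (Hlam _ Hp) as [H1 H2]. simpl in H2. apply Rnplus_w2; [apply H1; lia|lra|lra].
    + intros r (u & v & Hu & Hv & E). exists (u :: nil). split.
      { split; auto. intros j Hj. destruct j; [simpl; auto| lia]. }
      rewrite E. extensionality x. unfold lam', w2, lincomb. simpl. ring.
  - set (n1 := S m).
    set (T := fun w => exists u, Defs.in_prod X (S n1) A u /\ w = lincomb X (S n1) (lam u) u).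
    pose (lamc := fun (c : opt X) (u' : list (opt X)) =>
      if excluded_middle_informative (0 < sumR n1 (lam (u' ++ c :: nil))) then lam (u' ++ c :: nil) else (fun _ : nat => 1)).
    assert (HD : forall c, A n1 c -> exists D, K D /\ forall d, D d -> exists u', Defs.in_prod X n1 A u' /\ d = lincomb X n1 (lamc c u') u').
    { intros c Hc. apply IHm.
      - intros j Hj; apply HAK; unfold n1 in *; lia.
      - intros j Hj; apply HAf; unfold n1 in *; lia.
      - intros u' Hu'. unfold lamc. destruct excluded_middle_informative as [Hpos|Hnpos].
        + destruct (Hlam _ (in_prod_app X n1 A u' c Hu' Hc)) as [H1 H2]. split; [intros j Hj; apply H1; unfold n1 in *; lia | auto].
        + assert (0 <= sumR m (fun _ => 1)) by (apply sumR_nonneg; intros; lra).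
          split; [intros; lra| unfold n1; simpl; lra]. }
    assert (Hit : forall l R, (forall c, In c l -> A n1 c) -> K R -> (forall w, R w -> T w \/ In w l) ->
               exists R', K R' /\ forall w, R' w -> T w).
    { induction l as [|c l IHl]; intros R Hl HR Hinv.
      - exists R; split; auto. intros w Hw. destruct (Hinv w Hw) as [H|[]]; auto.
      - assert (Hc : A n1 c) by (apply Hl; left; auto).
        destruct (HD c Hc) as [D [HDK HDd]].
        destruct (choice_fun (opt X) (list (opt X)) nil D
           (fun d u' => Defs.in_prod X n1 A u' /\ d = lincomb X n1 (lamc c u') u') HDd) as [g Hg].
        pose (f := fun d => if excluded_middle_informative (0 < sumR n1 (lam (g d ++ c :: nil)))
                   then w2 (lam (g d ++ c :: nil) n1) 1 else w2 (lam (g d ++ c :: nil) n1) 0).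
        pose (lam' := fun r d => if excluded_middle_informative (r = c) then f d else w2 1 0).
        assert (H := HK3 R D HR HDK lam').
        apply (IHl (fun w => exists u v, R u /\ D v /\ w = (fun x => lam' u v 0%nat * u x + lam' u v 1%nat * v x))).
        + intros c' Hc'; apply Hl; right; auto.
        + apply H. intros r d Hr Hd. unfold lam'. destruct excluded_middle_informative; [|apply Rnplus_w2; lra].
          destruct (Hg d Hd) as [Hgd _].
          destruct (Hlam _ (in_prod_app X n1 A (g d) c Hgd Hc)) as [H1 H2].
          assert (Hn1 : 0 <= lam (g d ++ c :: nil) n1) by (apply H1; lia).
          change (0 < sumR n1 (lam (g d ++ c :: nil)) + lam (g d ++ c :: nil) n1) in H2.
          unfold f. destruct excluded_middle_informative; apply Rnplus_w2; lra.
        + intros w (r & d & Hr & Hd & E). unfold lam' in E. destruct excluded_middle_informative as [Ec|Nec].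
          * left. subst r. destruct (Hg d Hd) as [Hgd Ed].
            exists (g d ++ c :: nil). split. apply in_prod_app; auto.
            destruct (Hlam _ (in_prod_app X n1 A (g d) c Hgd Hc)) as [H1 H2].
            rewrite E. extensionality x. assert (Edx := f_equal (fun h => h x) Ed). cbv beta in Edx.
            rewrite Edx. destruct Hgd as [Hlen _]. rewrite lincomb_S by auto.
            unfold f, lamc.
            destruct (excluded_middle_informative (0 < sumR n1 (lam (g d ++ c :: nil)))) as [Hpos|Hnpos]; unfold w2; simpl.
            -- ring.
            -- unfold lincomb. rewrite (sumR_zero n1 (fun j => lam (g d ++ c :: nil) j * nth j (g d) (zero X) x)). ring.
               intros j Hj. rewrite (sumR_zero_each n1 (lam (g d ++ c :: nil))); auto. ring.
               all: try (intros; apply H1; lia).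
          * assert (Ew : w = r) by (rewrite E; extensionality x; unfold w2; simpl; ring).
            rewrite Ew. destruct (Hinv r Hr) as [H0|[E'|Hi]]; auto. congruence. }
    destruct (HAf n1 ltac:(lia)) as [l Hl].
    apply (Hit l (A n1)).
    + intros c Hc; apply Hl; auto.
    + apply HAK; lia.
    + intros w Hw; right; apply Hl; auto.
Qed.

Definition PD X n A (B : oset X) := exists lam : list (opt X) -> nat -> R,
  (forall u, Defs.in_prod X n A u -> Rnplus n (lam u)) /\
  forall u, Defs.in_prod X n A u -> exists s, (B s \/ s = zero X) /\ ople X (lincomb X n (lam u) u) s.

Definition RHS X n A (B : oset X) := (exists u, B u /\ posopt X u) \/ (n <> 0%nat /\ PD X n A B).

Lemma pos_comb X (u v : opt X) a b : posopt X u -> 0 < a -> (forall x, 0 <= b * v x) ->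
  posopt X (fun x => a * u x + b * v x).
Proof. intros Hu Ha Hb. destruct (posopt_ex X u Hu) as [x0 Hx0]. destruct Hu as [Hu _].
  split. intros x. unfold zero. specialize (Hu x). specialize (Hb x). unfold zero in Hu. nra.
  intros E. assert (E' := f_equal (fun h => h x0) E). unfold zero in E'. simpl in E'.
  specialize (Hb x0). nra. Qed.

Lemma Rn2 m : Rnplus 2 m -> 0 <= m 0%nat /\ 0 <= m 1%nat /\ 0 < m 0%nat + m 1%nat.
Proof. intros [H1 H2]. simpl in H2. repeat split; try (apply H1; lia). lra. Qed.

Ltac ex3 mu a b := exists (fun x => mu a b 0%nat * a x + mu a b 1%nat * b x); split; [exists a, b; repeat split; auto|].

Lemma RHS_K3 X n A (B1 B2 : oset X) mu : RHS X n A B1 -> RHS X n A B2 ->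
  (forall u v, B1 u -> B2 v -> Rnplus 2 (mu u v)) ->
  RHS X n A (fun w => exists u v, B1 u /\ B2 v /\ w = (fun x => mu u v 0%nat * u x + mu u v 1%nat * v x)).
Proof.
  intros H1 H2 Hmu.
  destruct H1 as [[p1 [Hp1 Pp1]] | [Hn [l1 [Hl1 Hd1]]]];
  destruct H2 as [[p2 [Hp2 Pp2]] | [Hn' [l2 [Hl2 Hd2]]]].
  - left. ex3 mu p1 p2.
    destruct (Rn2 _ (Hmu _ _ Hp1 Hp2)) as (a0 & a1 & a2).
    destruct (Rlt_dec 0 (mu p1 p2 0%nat)).
    + apply pos_comb; auto. intros x. destruct Pp2 as [P _]. specialize (P x); unfold zero in P. nra.
    + assert (E : mu p1 p2 0%nat = 0) by lra. rewrite E.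
      assert (Hf : (fun x => 0 * p1 x + mu p1 p2 1%nat * p2 x) = (fun x => mu p1 p2 1%nat * p2 x + 0 * p1 x))
        by (extensionality x; ring). rewrite Hf. apply pos_comb; auto. lra. intros; lra.
  - destruct (classic (exists v, B2 v /\ mu p1 v 1%nat = 0)) as [[v [Hv E]]|Hno].
    + left. ex3 mu p1 v.
      destruct (Rn2 _ (Hmu _ _ Hp1 Hv)) as (a0 & a1 & a2). rewrite E. apply pos_comb; auto. lra. intros; lra.
    + right. split; auto.
      destruct (choice_fun _ _ (zero X) _ _ Hd2) as [s2 Hs2].
      exists (fun u => if excluded_middle_informative (s2 u = zero X) then l2 u else fun j => mu p1 (s2 u) 1%nat * l2 u j).
      split.
      * intros u Hu. destruct excluded_middle_informative; auto.
        destruct (Hs2 u Hu) as [[Hb|Hz] _]; [|congruence].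
        destruct (Rn2 _ (Hmu _ _ Hp1 Hb)) as (a0 & a1 & a2).
        apply Rnplus_scale; auto. destruct (Req_dec (mu p1 (s2 u) 1%nat) 0); [exfalso; apply Hno; eauto|lra].
      * intros u Hu. destruct (Hs2 u Hu) as [[Hb|Hz] Hle]; destruct excluded_middle_informative as [Ez|Nz].
        -- exists (zero X). split; auto. rewrite <- Ez; auto.
        -- exists (fun x => mu p1 (s2 u) 0%nat * p1 x + mu p1 (s2 u) 1%nat * s2 u x); split; [left; exists p1, (s2 u); repeat split; auto|].
           intros x. rewrite lincomb_scale. specialize (Hle x).
           destruct (Rn2 _ (Hmu _ _ Hp1 Hb)) as (a0 & a1 & a2).
           destruct Pp1 as [P _]. specialize (P x); unfold zero in P. cbv beta. nra.
        -- exists (zero X). split; auto. rewrite <- Ez; auto.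
        -- congruence.
  - destruct (classic (exists u, B1 u /\ mu u p2 0%nat = 0)) as [[v [Hv E]]|Hno].
    + left. ex3 mu v p2.
      destruct (Rn2 _ (Hmu _ _ Hv Hp2)) as (a0 & a1 & a2). rewrite E.
      assert (Hf : (fun x => 0 * v x + mu v p2 1%nat * p2 x) = (fun x => mu v p2 1%nat * p2 x + 0 * v x))
        by (extensionality x; ring). rewrite Hf. apply pos_comb; auto. lra. intros; lra.
    + right. split; auto.
      destruct (choice_fun _ _ (zero X) _ _ Hd1) as [s1 Hs1].
      exists (fun u => if excluded_middle_informative (s1 u = zero X) then l1 u else fun j => mu (s1 u) p2 0%nat * l1 u j).
      split.
      * intros u Hu. destruct excluded_middle_informative; auto.
        destruct (Hs1 u Hu) as [[Hb|Hz] _]; [|congruence].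
        destruct (Rn2 _ (Hmu _ _ Hb Hp2)) as (a0 & a1 & a2).
        apply Rnplus_scale; auto. destruct (Req_dec (mu (s1 u) p2 0%nat) 0); [exfalso; apply Hno; eauto|lra].
      * intros u Hu. destruct (Hs1 u Hu) as [[Hb|Hz] Hle]; destruct excluded_middle_informative as [Ez|Nz].
        -- exists (zero X). split; auto. rewrite <- Ez; auto.
        -- exists (fun x => mu (s1 u) p2 0%nat * s1 u x + mu (s1 u) p2 1%nat * p2 x); split; [left; exists (s1 u), p2; repeat split; auto|].
           intros x. rewrite lincomb_scale. specialize (Hle x).
           destruct (Rn2 _ (Hmu _ _ Hb Hp2)) as (a0 & a1 & a2).
           destruct Pp2 as [P _]. specialize (P x); unfold zero in P. cbv beta. nra.
        -- exists (zero X). split; auto. rewrite <- Ez; auto.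
        -- congruence.
  - right. split; auto.
    destruct (choice_fun _ _ (zero X) _ _ Hd1) as [s1 Hs1].
    destruct (choice_fun _ _ (zero X) _ _ Hd2) as [s2 Hs2].
    exists (fun u => if excluded_middle_informative (s1 u = zero X) then l1 u else
                     if excluded_middle_informative (s2 u = zero X) then l2 u else
                     fun j => mu (s1 u) (s2 u) 0%nat * l1 u j + mu (s1 u) (s2 u) 1%nat * l2 u j).
    split.
    + intros u Hu. destruct excluded_middle_informative; auto. destruct excluded_middle_informative; auto.
      destruct (Hs1 u Hu) as [[Hb1|Hz] _]; [|congruence].
      destruct (Hs2 u Hu) as [[Hb2|Hz] _]; [|congruence].
      apply Rnplus_comb; auto.
    + intros u Hu. destruct (Hs1 u Hu) as [H1 Hle1]. destruct (Hs2 u Hu) as [H2 Hle2].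
      destruct excluded_middle_informative as [Ez1|Nz1].
      { exists (zero X). split; auto. rewrite <- Ez1; auto. }
      destruct excluded_middle_informative as [Ez2|Nz2].
      { exists (zero X). split; auto. rewrite <- Ez2; auto. }
      destruct H1 as [Hb1|Hz]; [|congruence]. destruct H2 as [Hb2|Hz]; [|congruence].
      exists (fun x => mu (s1 u) (s2 u) 0%nat * s1 u x + mu (s1 u) (s2 u) 1%nat * s2 u x); split; [left; exists (s1 u), (s2 u); repeat split; auto|].
      intros x. rewrite lincomb_comb. specialize (Hle1 x). specialize (Hle2 x).
      destruct (Rn2 _ (Hmu _ _ Hb1 Hb2)) as (a0 & a1 & a2). cbv beta. nra.
Qed.

Theorem mainTheorem19 (X : Type) (HX : inhabited X) (n : nat)
  (A : nat -> oset X) (HA : forall j, (j < n)%nat -> finite_oset X (A j))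
  (S : oset X) (HS : finite_oset X S) :
  Ex X (fun B => exists j, (j < n)%nat /\ B = A j) S <->
  ((exists u, S u /\ posopt X u) \/
   (n <> 0%nat /\
    exists T, Posi' X n A T /\
      forall t, T t -> exists s, (S s \/ s = zero X) /\ ople X t s)).
Proof.
  split.
  - intros [HSf HEx].
    assert (Conv : forall B, RHS X n A B -> (exists u, B u /\ posopt X u) \/
      (n <> 0%nat /\ exists T, Posi' X n A T /\ forall t, T t -> exists s, (B s \/ s = zero X) /\ ople X t s)).
    { intros B [H|[Hn [l [Hl Hd]]]]; [left; auto|right; split; auto].
      exists (fun w => exists u, Defs.in_prod X n A u /\ w = lincomb X n (l u) u). split.
      - exists l. split; auto. intros w; tauto.
      - intros t [u [Hu ->]]. auto. }
    destruct (classic (RHS X n A (fun u => u = zero X))) as [H0|H0].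
    + destruct (Conv _ H0) as [[u [Eu Pu]]|[Hn [T [HT Hd]]]].
      * exfalso. apply (posopt_neq X u Pu Eu).
      * right. split; auto. exists T. split; auto. intros t Ht.
        destruct (Hd t Ht) as [s [Hs Hle]]. exists (zero X). split; auto.
        destruct Hs as [->| ->]; auto.
    + apply Conv.
      assert (HK : (fun B => finite_oset X B /\ RHS X n A B) S).
      { apply HEx.
        - unfold coherent. split; [|split; [|split; [|split; [|split]]]].
          + intros B [H _]; auto.
          + intros B [Hf Hr]. split.
            * apply finite_sub. destruct Hf as [l Hl]. exists l. intros u [Hu _]. apply Hl; auto.
            * destruct Hr as [[u [Hu Pu]]|[Hn [l [Hl Hd]]]].
              -- left. exists u. split; auto. split; auto. apply posopt_neq; auto.
              -- right. split; auto. exists l. split; auto. intros u Hu.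
                 destruct (Hd u Hu) as [s [Hs Hle]]. exists s. split; auto.
                 destruct (classic (s = zero X)); [right; auto|left; split; auto; tauto].
          + intros [_ H]. apply H0; exact H.
          + intros v Hv. split. exists (v :: nil). intros u; split; [intros ->; left; auto| intros [->|[]]; auto].
            left. exists v. auto.
          + intros B1 B2 [Hf1 Hr1] [Hf2 Hr2] mu Hmu. split.
            * apply finite_sub. destruct Hf1 as [l1 Hl1], Hf2 as [l2 Hl2].
              exists (map (fun p => fun x => mu (fst p) (snd p) 0%nat * fst p x + mu (fst p) (snd p) 1%nat * snd p x) (list_prod l1 l2)).
              intros w (u & v & Hu & Hv & E). apply in_map_iff. exists (u, v). split; [simpl; auto|].
              apply List.in_prod; [apply Hl1|apply Hl2]; auto.
            * apply RHS_K3; auto.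
          + intros B Q [Hf Hr] HQ. split.
            * apply finite_sub. destruct Hf as [l1 Hl1], HQ as [l2 Hl2]. exists (l1 ++ l2).
              intros u [Hu|Hu]; apply in_or_app; [left; apply Hl1|right; apply Hl2]; auto.
            * destruct Hr as [[u [Hu Pu]]|[Hn [l [Hl Hd]]]].
              -- left. exists u. split; auto.
              -- right. split; auto. exists l. split; auto. intros u Hu.
                 destruct (Hd u Hu) as [s [Hs Hle]]. exists s. split; auto. tauto.
        - intros B [j [Hj ->]]. split; [apply HA; auto|]. right. split; [lia|].
          exists (fun _ k => if Nat.eqb k j then 1 else 0). split.
          + intros u Hu. split. intros k Hk. destruct (Nat.eqb k j); lra.
            assert (E1 : sumR n (fun k => if Nat.eqb k j then 1 else 0) = 1).
            { transitivity (sumR n (fun k => (if Nat.eqb k j then 1 else 0) * 1)).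
              apply sumR_ext; intros; ring. apply (sumR_ind n j (fun _ => 1) Hj). }
            rewrite E1; lra.
          + intros u Hu. exists (nth j u (zero X)). split. left. destruct Hu as [_ Hu]. apply Hu; auto.
            intros x. unfold lincomb. rewrite (sumR_ind n j (fun k => nth k u (zero X) x) Hj). lra. }
      destruct HK; auto.
  - intros Hr. split; auto. intros K HK HKA.
    destruct Hr as [[u [Hu Pu]]|[Hn [T [[lam [Hlam HT]] Hdom]]]].
    + apply (pos_final X K HK S u); auto.
    + destruct n as [|m]; [congruence|].
      destruct (posi_closure X K HK m A) with (lam := lam) as [R [HR HRsub]]; auto.
      * intros j Hj. apply HKA. eauto.
      * apply (dom_final X K HK S R); auto. intros r Hr.
        destruct (HRsub r Hr) as [u [Hu E]]. apply Hdom. apply HT. eauto.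
Qed.
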